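(* Let $G$ be a graph of diameter $3$. Then $\chi_{ei}(G)\ge \rho(G)\ge \gamma_2(G)$. Moreover, there are graphs of diameter $3$ for which both equalities hold.
   Context: All graphs are finite and simple. A path $P_4$ in $G$ is a sequence $uxyv$ of four distinct vertices with $ux,xy,yv\in E(G)$; $u,v$ are its end vertices. An $e$-injective $k$-coloring of $G$ is a function $f:V(G)\to\{1,\dots,k\}$ with $f(u)\ne f(v)$ whenever $u,v$ are the end vertices of some path $P_4$ in $G$; $\chi_{ei}(G)$ is the least such $k$. A set $B\subseteq V(G)$ is a packing if $N[u]\cap N[v]=\emptyset$ for all distinct $u,v\in B$ (where $N[v]$ is the closed neighborhood); the packing number $\rho(G)$ is the maximum size of a packing. A set $D\subseteq V(G)$ is a 2-distance dominating set if every vertex not in $D$ is at distance at most $2$ from some vertex of $D$; $\gamma_2(G)$ is the minimum size of such a set. *)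

(* Defs.v *)
From mathcomp Require Import all_boot.
Set Implicit Arguments. Unset Strict Implicit. Unset Printing Implicit Defensive.

Section Graphs.
Variables (T : finType) (e : rel T).

Definition simple_graph : Prop := symmetric e /\ irreflexive e.

Definition ball (k : nat) (u : T) : {set T} :=
  iter k (fun S : {set T} => S :|: [set w | [exists x in S, e x w]]) [set u].

Definition dist_le (k : nat) (u v : T) : bool := v \in ball k u.

Definition diameter3 : Prop :=
  (forall u v, dist_le 3 u v) /\ (exists u v, ~~ dist_le 2 u v).

Definition P4 (u x y v : T) : bool :=
  [&& u != x, u != y, u != v, x != y, x != v, y != v, e u x, e x y & e y v].

Definition ei_coloring (k : nat) (f : T -> 'I_k) : bool :=
  [forall u, forall x, forall y, forall v, P4 u x y v ==> (f u != f v)].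

Definition ei_colorable (k : nat) : bool :=
  [exists f : {ffun T -> 'I_k}, ei_coloring f].

Lemma ei_colorable_exists : exists k, ei_colorable k.
Proof.
exists #|T|; apply/existsP; exists [ffun x => enum_rank x].
apply/forallP=> u; apply/forallP=> x; apply/forallP=> y; apply/forallP=> v.
apply/implyP=> /and5P [_ _ uv _ _]; rewrite !ffunE.
by apply: contra uv => /eqP /enum_rank_inj ->.
Qed.

Definition chi_ei : nat := ex_minn ei_colorable_exists.

Definition closed_nbhd (u : T) : {set T} := [set w | (w == u) || e u w].

Definition packing (B : {set T}) : bool :=
  [forall u in B, forall v in B, (u != v) ==> [disjoint closed_nbhd u & closed_nbhd v]].

Definition rho : nat := \max_(B : {set T} | packing B) #|B|.

Definition two_dist_dominating (D : {set T}) : bool :=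
  [forall v, (v \notin D) ==> [exists d in D, dist_le 2 d v]].

Definition gamma2_size (k : nat) : bool :=
  [exists D : {set T}, two_dist_dominating D && (#|D| == k)].

Lemma gamma2_exists : exists k, gamma2_size k.
Proof.
exists #|[set: T]|; apply/existsP; exists [set: T]; rewrite eqxx andbT.
by apply/forallP=> v; rewrite in_setT.
Qed.

Definition gamma2 : nat := ex_minn gamma2_exists.

End Graphs.

(* Main.v *)
Require Import Defs.
From mathcomp Require Import all_boot.

Set Implicit Arguments. Unset Strict Implicit. Unset Printing Implicit Defensive.

Section Gen.
Variables (T : finType) (e : rel T).

Lemma in_ball0 u v : (v \in ball e 0 u) = (v == u).
Proof. by rewrite /ball /= in_set1. Qed.

Lemma in_ballS k u v :
  (v \in ball e k.+1 u) = (v \in ball e k u) || [exists x in ball e k u, e x v].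
Proof. by rewrite /ball iterS in_setU inE. Qed.

Lemma ball_mono k u v : v \in ball e k u -> v \in ball e k.+1 u.
Proof. by rewrite in_ballS => ->. Qed.

Lemma ball_step k u x v : x \in ball e k u -> e x v -> v \in ball e k.+1 u.
Proof.
by move=> xb xv; rewrite in_ballS; apply/orP; right; apply/existsP; exists x; rewrite xb.
Qed.

Lemma nbhdE u w : (w \in closed_nbhd e u) = (w == u) || e u w.
Proof. by rewrite inE. Qed.

Hypothesis sym : symmetric e.

Lemma dist2_disj u v : dist_le e 2 u v = ~~ [disjoint closed_nbhd e u & closed_nbhd e v].
Proof.
apply/idP/idP.
- rewrite /dist_le !in_ballS in_ball0 => H.
  rewrite -setI_eq0; apply/set0Pn.
  case/orP: H => [/orP [/eqP ->| /existsP [x /andP [xb xv]]] | /existsP [x /andP [xb xv]]].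
  + by exists u; rewrite inE !nbhdE eqxx.
  + move: xb; rewrite in_ball0 => /eqP xu; subst x.
    by exists v; rewrite inE !nbhdE eqxx xv orbT.
  + move: xb; rewrite in_ballS in_ball0 => /orP [/eqP xu|]; first subst x.
    * by exists v; rewrite inE !nbhdE eqxx xv orbT.
    * case/existsP => y /andP []; rewrite in_ball0 => /eqP yu ux; subst y.
      by exists x; rewrite inE !nbhdE ux sym xv !orbT.
- rewrite -setI_eq0 => /set0Pn [w]; rewrite inE !nbhdE => /andP [/orP [/eqP ->|uw] /orP [/eqP wv|vw]].
  + by rewrite /dist_le wv !ball_mono // in_ball0.
  + by rewrite /dist_le; apply: ball_mono; apply: (@ball_step 0 u u); rewrite ?in_ball0 // sym.
  + by rewrite /dist_le -wv; apply: ball_mono; apply: (@ball_step 0 u u); rewrite ?in_ball0.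
  + rewrite /dist_le; apply: (@ball_step 1 u w); last by rewrite sym.
    by apply: (@ball_step 0 u u); rewrite ?in_ball0.
Qed.

Lemma packingP (B : {set T}) : reflect (forall u v, u \in B -> v \in B -> u != v ->
   [disjoint closed_nbhd e u & closed_nbhd e v]) (packing e B).
Proof.
apply: (iffP idP).
- move=> /forall_inP H u v uB vB uv.
  by move: (H u uB) => /forall_inP /(_ v vB) /implyP /(_ uv).
- move=> H; apply/forall_inP => u uB; apply/forall_inP => v vB; apply/implyP.
  exact: H.
Qed.

Hypothesis irr : irreflexive e.

Lemma getP4 u v : dist_le e 3 u v -> ~~ dist_le e 2 u v ->
  exists x y, P4 e u x y v.
Proof.
rewrite /dist_le => d3 nd2.
have nd1 : v \notin ball e 1 u by apply: contra nd2; apply: ball_mono.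
have nd0 : v != u by apply: contra nd1 => /eqP ->; rewrite ball_mono // in_ball0.
move: d3; rewrite in_ballS (negbTE nd2) orFb => /existsP [y /andP [yb yv]].
have ny1 : y \notin ball e 1 u by apply: contra nd2 => yb1; apply: ball_step yb1 yv.
move: yb; rewrite in_ballS (negbTE ny1) orFb => /existsP [x /andP [xb xy]].
move: xb; rewrite in_ballS in_ball0 => /orP [/eqP xu|].
  by move: ny1; rewrite -xu (ball_step _ xy) // in_ball0.
case/existsP => z /andP []; rewrite in_ball0 => /eqP -> ux.
exists x, y; rewrite /P4 ux xy yv.
have -> : u != x by apply: contraTneq ux => ->; rewrite irr.
have -> : u != y by apply: contra ny1 => /eqP <-; rewrite ball_mono // in_ball0.
have -> : u != v by rewrite eq_sym.
have -> : x != y by apply: contraTneq xy => ->; rewrite irr.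
have -> : x != v.
  by apply: contra nd1 => /eqP <-; apply: (@ball_step 0 u u); rewrite ?in_ball0.
have -> : y != v by apply: contraTneq yv => ->; rewrite irr.
done.
Qed.

Lemma rho_le_chi : diameter3 e -> rho e <= chi_ei e.
Proof.
move=> [d3 _].
rewrite /chi_ei; case: ex_minnP => k /existsP [f Hf] _.
apply/bigmax_leqP => B /packingP HB.
have inj : {in B &, injective f}.
  move=> u v uB vB fuv; apply/eqP; apply/negP => /negP uv.
  have nd2 : ~~ dist_le e 2 u v by rewrite dist2_disj negbK; apply: HB.
  have [x [y Hp]] := getP4 (d3 u v) nd2.
  move: Hf => /forallP /(_ u) /forallP /(_ x) /forallP /(_ y) /forallP /(_ v) /implyP /(_ Hp).
  by rewrite fuv eqxx.
rewrite -(card_in_imset inj); apply: leq_trans (max_card _) _; by rewrite card_ord.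
Qed.

Lemma gamma2_le_rho : gamma2 e <= rho e.
Proof.
have p0 : packing e set0 by apply/packingP => u v; rewrite inE.
case: (@arg_maxnP _ set0 (packing e) (fun B : {set T} => #|B|) p0) => B pB Bmax.
apply: (@leq_trans #|B|); last by apply: (leq_bigmax_cond (F := fun B : {set T} => #|B|)).
rewrite /gamma2; case: ex_minnP => n _ Hmin; apply: Hmin.
apply/existsP; exists B; rewrite eqxx andbT.
apply/forallP => v; apply/implyP => vB.
case: (boolP [exists d in B, dist_le e 2 d v]) => // H.
have pB' : packing e (v |: B).
  apply/packingP => a b; rewrite !inE.
  have far : forall d, d \in B -> [disjoint closed_nbhd e d & closed_nbhd e v].
    move=> d dB; apply/negPn; rewrite -dist2_disj; apply: contra H => Hd.
    by apply/existsP; exists d; rewrite dB.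
  move=> /orP [/eqP ->|aB] /orP [/eqP ->|bB] ab.
  - by rewrite eqxx in ab.
  - by rewrite disjoint_sym; apply: far.
  - exact: far.
  - by move/packingP: pB; apply.
have := Bmax _ pB'; rewrite cardsU1 vB /geq /= add1n ltnn.
done.
Qed.

End Gen.

Definition e6 : rel 'I_6 :=
  fun (i j : 'I_6) => (j == (i.+1 %% 6) :> nat) || (i == (j.+1 %% 6) :> nat).

Definition L6 : seq 'I_6 :=
  [:: @Ordinal 6 0 isT; @Ordinal 6 1 isT; @Ordinal 6 2 isT;
      @Ordinal 6 3 isT; @Ordinal 6 4 isT; @Ordinal 6 5 isT].

Lemma L6P (x : 'I_6) : x \in L6.
Proof. by case: x => [[|[|[|[|[|[|m]]]]]] Hm]. Qed.

Fixpoint dl (k : nat) (u v : 'I_6) : bool :=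
  if k is k'.+1 then dl k' u v || has (fun x => dl k' u x && e6 x v) L6
  else u == v.

Lemma dlS k u v : dl k.+1 u v = dl k u v || has (fun x => dl k u x && e6 x v) L6.
Proof. by []. Qed.

Lemma dlE k u v : dist_le e6 k u v = dl k u v.
Proof.
elim: k v => [|k IH] v; first by rewrite /dist_le in_ball0 eq_sym.
rewrite /dist_le in_ballS -/(dist_le e6 k u v) IH dlS; congr orb.
apply/existsP/hasP => [[x /andP [xb xv]]|[x _ /andP [xb xv]]].
  by exists x; [apply: L6P | have := IH x; rewrite /dist_le xb => <-; rewrite xv].
by exists x; have := IH x; rewrite /dist_le xb => ->; rewrite xv.
Qed.

Lemma all6P (P : 'I_6 -> bool) : all P L6 -> forall x, P x.
Proof. by move/allP => H x; apply: H; apply: L6P. Qed.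

Definition anti (u : 'I_6) : 'I_6 := Ordinal (ltn_pmod (u + 3) (isT : 0 < 6)).

Definition c6 (u : 'I_6) : 'I_2 := if (u < 3)%N then ord0 else ord_max.

Lemma e6_simple : simple_graph e6.
Proof.
split; first by move=> x y; rewrite /e6 orbC.
by move=> x; rewrite /e6 orbb; case: x => [[|[|[|[|[|[|m]]]]]] Hm].
Qed.

Lemma e6_d3 : diameter3 e6.
Proof.
split.
  move=> u v; rewrite dlE.
  have H : all (fun u => all (fun v => dl 3 u v) L6) L6 by vm_compute.
  exact: (all6P (all6P H u) v).
by exists (@Ordinal 6 0 isT), (@Ordinal 6 3 isT); rewrite dlE; vm_compute.
Qed.

Lemma e6_far : forall u w, ~~ dl 2 u w -> w = anti u.
Proof.
have H : all (fun u => all (fun w => ~~ dl 2 u w ==> (w == anti u)) L6) L6.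
  by vm_compute.
by move=> u w /(implyP (all6P (all6P H u) w)) /eqP.
Qed.

Lemma e6_anti : forall u, ~~ dl 2 u (anti u).
Proof.
have H : all (fun u => ~~ dl 2 u (anti u)) L6 by vm_compute.
exact: all6P H.
Qed.

Lemma two_le_card (T : finType) (D : {set T}) u w :
  u \in D -> w \in D -> u != w -> 1 < #|D|.
Proof.
move=> uD wD uw; apply: (@leq_trans #|[set u; w]|); first by rewrite cards2 uw.
by apply: subset_leq_card; apply/subsetP => x; rewrite !inE => /orP [] /eqP ->.
Qed.

Lemma anti_neq u : u != anti u.
Proof.
have H : all (fun u => u != anti u) L6 by vm_compute.
exact: all6P H u.
Qed.

Lemma e6_chi : chi_ei e6 <= 2.
Proof.
rewrite /chi_ei; case: ex_minnP => n _ Hmin; apply: Hmin.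
apply/existsP; exists [ffun x => c6 x].
apply/forallP => u; apply/forallP => x; apply/forallP => y; apply/forallP => v.
rewrite !ffunE.
have H : all (fun u => all (fun x => all (fun y => all (fun v =>
   P4 e6 u x y v ==> (c6 u != c6 v)) L6) L6) L6) L6 by vm_compute.
exact: (all6P (all6P (all6P (all6P H u) x) y) v).
Qed.

Lemma e6_rho_le : rho e6 <= 2.
Proof.
have [sym _] := e6_simple.
apply/bigmax_leqP => B /packingP HB.
case: (set_0Vmem B) => [->|[u uB]]; first by rewrite cards0.
apply: (@leq_trans #|[set u; anti u]|); last by rewrite cards2; case: (_ != _).
apply: subset_leq_card; apply/subsetP => w wB; rewrite !inE.
case: (eqVneq u w) => [->|uw] //=.
have : ~~ dl 2 u w.
  by rewrite -dlE (dist2_disj sym) negbK; apply: HB.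
by move/e6_far => ->.
Qed.

Lemma e6_gamma_ge : 2 <= gamma2 e6.
Proof.
rewrite /gamma2; case: ex_minnP => n /existsP [D /andP [HD /eqP Dn]] _.
rewrite -Dn; case: (set_0Vmem D) => [D0|[d dD]].
  move: HD => /forallP /(_ (@Ordinal 6 0 isT)); rewrite D0 inE /=.
  by case/existsP => x; rewrite inE.
case: (boolP (anti d \in D)) => aD; first exact: (two_le_card dD aD (anti_neq d)).
move: HD => /forallP /(_ (anti d)) /implyP /(_ aD) /existsP [d' /andP [d'D dd]].
case: (eqVneq d d') => [dd'|ndd]; last exact: (two_le_card dD d'D ndd).
by move: dd; rewrite -dd' dlE (negbTE (e6_anti d)).
Qed.

Theorem proposition2p7 :
  (forall (T : finType) (e : rel T),
      simple_graph e -> diameter3 e ->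
      rho e <= chi_ei e /\ gamma2 e <= rho e) /\
  (exists (T : finType) (e : rel T),
      [/\ simple_graph e, diameter3 e, chi_ei e = rho e & rho e = gamma2 e]).
Proof.
split.
  move=> T e [sym irr] d3; split; first exact: rho_le_chi.
  exact: gamma2_le_rho.
exists 'I_6, e6.
have [sym irr] := e6_simple.
have h1 := rho_le_chi sym irr e6_d3.
have h2 := gamma2_le_rho sym.
have h3 := e6_chi. have h4 := e6_rho_le. have h5 := e6_gamma_ge.
split; [exact: e6_simple | exact: e6_d3 | |].
  by apply/eqP; rewrite eqn_leq h1 andbT (leq_trans h3) // (leq_trans h5) // h2.
by apply/eqP; rewrite eqn_leq h2 andbT (leq_trans h4) // h5.
Qed.
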